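(* Let $u$ be any solution of the linear system $u'=Au$ that lies in $\mathbb V$, for example $u(t)=\big(\tfrac{A_2}{2d}y_0e^{-2t},\,y_0e^{-2t},\,z_0e^{-2t},\,w_0e^{-2t}\big)$ with $y_0,z_0,w_0\in\mathbb R$. Then the operator $T_u:\mathbb V\to\mathbb V$ has at most one fixed point.
   Context: Fix a positive integer $d$ and $q\in\mathbb R$. Put $A_2=d(d+2)$ and $A_3=\tfrac14d(d+2)^2q^2$. Write system (S$'$) (below) as $v'=Av+b(v)$ for $v=(v_1,v_2,v_3,v_4)=(X,\tilde Y,\tilde Z,W)$, where $A$ is its linearization at the origin, $$A=\begin{pmatrix}0&-A_2/d&0&0\\0&-2&0&0\\0&0&-2&0\\0&0&0&-2\end{pmatrix},$$ and $b:\mathbb R^4\to\mathbb R^4$ collects the remaining terms. Each component of $b$ is a polynomial of degree at most 3 with no constant or linear terms. System (S$'$) is $$X'=-X(dX^2+\tilde Z^2-2\tilde Z)-\tfrac{A_2}{d}\tilde Y+2\tfrac{A_3}{d}W^2,\qquad \tilde Y'=-2\tilde Y(dX^2-X+\tilde Z^2-2\tilde Z+1),$$ $$\tilde Z'=-\tilde Z(dX^2+\tilde Z^2-3\tilde Z+2)+dX^2+A_3W^2,\qquad W'=-W(dX^2-2X+\tilde Z^2-3\tilde Z+2).$$ $\Phi(t,s)=e^{A(t-s)}$ is the fundamental matrix. Explicitly, its first row is $\big(1,\tfrac{A_2}{2d}(e^{-2(t-s)}-1),0,0\big)$, its other diagonal entries are $e^{-2(t-s)}$, and its remaining entries are $0$.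 $\mathbb V=\{v\in C([0,\infty),\mathbb R^4):\sup_{t\ge0}e^{2t}|v(t)|<\infty\}$ carries the norm $\|v\|=\sup_{t\ge0}e^{2t}|v(t)|$. For such $u$, $$T_uv(t)=u(t)-\int_t^\infty\Phi(t,s)\,b(v(s))\,ds.$$ *)

(* Defs.v *)
From Stdlib Require Import Reals Lra.
Open Scope R_scope.

(* Vectors of R^4, v = (v1,v2,v3,v4) = (X, Ytilde, Ztilde, W). *)
Record vec4 := mk4 { c1 : R; c2 : R; c3 : R; c4 : R }.

Definition vnorm (v : vec4) : R :=
  sqrt (c1 v ^ 2 + c2 v ^ 2 + c3 v ^ 2 + c4 v ^ 2).

Definition vsub (v w : vec4) : vec4 :=
  mk4 (c1 v - c1 w) (c2 v - c2 w) (c3 v - c3 w) (c4 v - c4 w).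

Definition A2 (d : nat) : R := INR d * (INR d + 2).
Definition A3 (d : nat) (q : R) : R := / 4 * INR d * (INR d + 2) ^ 2 * q ^ 2.

Definition Fsys (d : nat) (q : R) (v : vec4) : vec4 :=
  let X := c1 v in let Y := c2 v in let Z := c3 v in let W := c4 v in
  let dR := INR d in
  mk4 (- X * (dR * X ^ 2 + Z ^ 2 - 2 * Z) - A2 d / dR * Y + 2 * (A3 d q / dR) * W ^ 2)
      (- 2 * Y * (dR * X ^ 2 - X + Z ^ 2 - 2 * Z + 1))
      (- Z * (dR * X ^ 2 + Z ^ 2 - 3 * Z + 2) + dR * X ^ 2 + A3 d q * W ^ 2)
      (- W * (dR * X ^ 2 - 2 * X + Z ^ 2 - 3 * Z + 2)).

(* Linearization A at the origin, applied to v. *)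
Definition Aapp (d : nat) (v : vec4) : vec4 :=
  mk4 (- (A2 d / INR d) * c2 v) (-2 * c2 v) (-2 * c3 v) (-2 * c4 v).

Definition bnl (d : nat) (q : R) (v : vec4) : vec4 := vsub (Fsys d q v) (Aapp d v).

(* Fundamental matrix Phi(t,s) = e^{A(t-s)} applied to a vector. *)
Definition Phi_app (d : nat) (t s : R) (v : vec4) : vec4 :=
  let e := exp (-2 * (t - s)) in
  mk4 (c1 v + A2 d / (2 * INR d) * (e - 1) * c2 v)
      (e * c2 v) (e * c3 v) (e * c4 v).

Definition cont_on_nonneg (f : R -> R) : Prop :=
  forall t, 0 <= t -> forall eps, 0 < eps -> exists delta, 0 < delta /\
    forall s, 0 <= s -> Rabs (s - t) < delta -> Rabs (f s - f t) < eps.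

Definition inV (v : R -> vec4) : Prop :=
  cont_on_nonneg (fun t => c1 (v t)) /\ cont_on_nonneg (fun t => c2 (v t)) /\
  cont_on_nonneg (fun t => c3 (v t)) /\ cont_on_nonneg (fun t => c4 (v t)) /\
  exists K, forall t, 0 <= t -> exp (2 * t) * vnorm (v t) <= K.

Definition improper_int (f : R -> R) (a L : R) : Prop :=
  (forall x, a <= x -> inhabited (Riemann_integrable f a x)) /\
  forall eps, 0 < eps -> exists M, forall x (pr : Riemann_integrable f a x),
    a <= x -> M <= x -> Rabs (RiemannInt pr - L) < eps.

Definition solves_linear (d : nat) (u : R -> vec4) : Prop :=
  forall t, 0 < t ->
    derivable_pt_lim (fun s => c1 (u s)) t (c1 (Aapp d (u t))) /\
    derivable_pt_lim (fun s => c2 (u s)) t (c2 (Aapp d (u t))) /\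
    derivable_pt_lim (fun s => c3 (u s)) t (c3 (Aapp d (u t))) /\
    derivable_pt_lim (fun s => c4 (u s)) t (c4 (Aapp d (u t))).

Definition fixed_point_T (d : nat) (q : R) (u v : R -> vec4) : Prop :=
  inV v /\
  forall t, 0 <= t ->
    improper_int (fun s => c1 (Phi_app d t s (bnl d q (v s)))) t (c1 (u t) - c1 (v t)) /\
    improper_int (fun s => c2 (Phi_app d t s (bnl d q (v s)))) t (c2 (u t) - c2 (v t)) /\
    improper_int (fun s => c3 (Phi_app d t s (bnl d q (v s)))) t (c3 (u t) - c3 (v t)) /\
    improper_int (fun s => c4 (Phi_app d t s (bnl d q (v s)))) t (c4 (u t) - c4 (v t)).

(* Main.v *)
From Pilot Require Import Defs.
From Stdlib Require Import Reals.
From Stdlib Require Import Lra.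
From Coquelicot Require Import Coquelicot.
Import Pilot.Defs.
Open Scope R_scope.

Lemma improper_bound f1 f2 g t L1 L2 G :
 improper_int f1 t L1 -> improper_int f2 t L2 ->
 (forall s, t <= s -> Rabs (f1 s - f2 s) <= g s) ->
 (forall x, t <= x -> ex_RInt g t x /\ RInt g t x <= G) ->
 Rabs (L1 - L2) <= G.
Proof.
  intros [I1 C1] [I2 C2] Hb Hg.
  apply Rnot_lt_le; intro H.
  set (eps := (Rabs (L1 - L2) - G) / 3).
  assert (Heps : 0 < eps) by (unfold eps; lra).
  destruct (C1 eps Heps) as [M1 HM1].
  destruct (C2 eps Heps) as [M2 HM2].
  set (x := Rmax t (Rmax M1 M2)).
  assert (Htx : t <= x) by (unfold x; apply Rmax_l).
  assert (HM1x : M1 <= x) by (unfold x; eapply Rle_trans; [apply Rmax_l|apply Rmax_r]).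
  assert (HM2x : M2 <= x) by (unfold x; eapply Rle_trans; [apply Rmax_r|apply Rmax_r]).
  destruct (I1 x Htx) as [pr1]. destruct (I2 x Htx) as [pr2].
  specialize (HM1 x pr1 Htx HM1x). specialize (HM2 x pr2 Htx HM2x).
  rewrite <- RInt_Reals in HM1, HM2.
  destruct (Hg x Htx) as [Eg Hgx].
  pose proof (ex_RInt_Reals_1 _ _ _ pr1) as E1.
  pose proof (ex_RInt_Reals_1 _ _ _ pr2) as E2.
  assert (P1 : RInt (fun y => f2 y + g y) t x = RInt f2 t x + RInt g t x)
    by (apply (RInt_plus f2 g); assumption).
  assert (P2 : RInt (fun y => f1 y + g y) t x = RInt f1 t x + RInt g t x)
    by (apply (RInt_plus f1 g); assumption).
  assert (Q1 : RInt f1 t x <= RInt (fun y => f2 y + g y) t x).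
  { apply RInt_le; auto.
    - apply (ex_RInt_plus f2 g); auto.
    - intros y Hy. specialize (Hb y (Rlt_le _ _ (proj1 Hy))).
      apply Rabs_le_between in Hb. lra. }
  assert (Q2 : RInt f2 t x <= RInt (fun y => f1 y + g y) t x).
  { apply RInt_le; auto.
    - apply (ex_RInt_plus f1 g); auto.
    - intros y Hy. specialize (Hb y (Rlt_le _ _ (proj1 Hy))).
      apply Rabs_le_between in Hb. lra. }
  rewrite P1 in Q1. rewrite P2 in Q2.
  apply Rabs_def2 in HM1. apply Rabs_def2 in HM2.
  assert (Rabs (L1 - L2) <= G + 2 * eps).
  { apply Rabs_le. lra. }
  unfold eps in H0. lra.
Qed.

Lemma exp_int k m t x : 0 <= k -> 0 < m -> t <= x ->
  ex_RInt (fun s => k * exp (- m * s)) t x /\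
  RInt (fun s => k * exp (- m * s)) t x <= k * exp (- m * t) / m.
Proof.
  intros Hk Hm Htx.
  assert (D : is_RInt (fun s => k * exp (- m * s)) t x
     (minus ((fun s => - k / m * exp (- m * s)) x) ((fun s => - k / m * exp (- m * s)) t))).
  { apply (is_RInt_derive (fun s => - k / m * exp (- m * s))).
    - intros y _. auto_derive; auto. field. lra.
    - intros y _. apply (ex_derive_continuous (fun s => k * exp (- m * s))). auto_derive. auto. }
  split. eexists; exact D.
  rewrite (is_RInt_unique _ _ _ _ D).
  unfold minus, plus, opp; simpl.
  assert (0 < exp (- m * x)) by apply exp_pos.
  assert (0 <= k / m * exp (- m * x)).
  { apply Rmult_le_pos; [|lra]. unfold Rdiv; apply Rmult_le_pos; [lra|].
    left; apply Rinv_0_lt_compat; lra. }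
  replace (k * exp (- m * t) / m) with (k / m * exp (- m * t)) by (field; lra).
  lra.
Qed.

Lemma lip2 x y x' y' r : Rabs x <= r -> Rabs x' <= r -> Rabs y <= r -> Rabs y' <= r ->
  Rabs (x*y - x'*y') <= r*(Rabs (x-x') + Rabs (y-y')).
Proof.
  intros. replace (x*y - x'*y') with ((x-x')*y + x'*(y-y')) by ring.
  eapply Rle_trans; [apply Rabs_triang|]. rewrite !Rabs_mult.
  pose proof (Rabs_pos (x-x')). pose proof (Rabs_pos (y-y')).
  assert (Rabs (x-x') * Rabs y <= Rabs (x-x') * r) by (apply Rmult_le_compat_l; auto).
  assert (Rabs x' * Rabs (y-y') <= r * Rabs (y-y')) by (apply Rmult_le_compat_r; auto).
  lra.
Qed.

Lemma lip3 x y z x' y' z' r : Rabs x <= r -> Rabs x' <= r -> Rabs y <= r -> Rabs y' <= r ->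
  Rabs z <= r -> Rabs z' <= r ->
  Rabs (x*y*z - x'*y'*z') <= r*r*(Rabs (x-x') + Rabs (y-y') + Rabs (z-z')).
Proof.
  intros. replace (x*y*z - x'*y'*z') with ((x-x')*(y*z) + x'*(y-y')*z + (x'*y')*(z-z')) by ring.
  pose proof (Rabs_triang ((x - x') * (y * z) + x' * (y - y') * z) (x' * y' * (z - z'))).
  pose proof (Rabs_triang ((x - x') * (y * z)) (x' * (y - y') * z)).
  rewrite !Rabs_mult in *.
  pose proof (Rabs_pos (x-x')). pose proof (Rabs_pos (y-y')). pose proof (Rabs_pos (z-z')).
  pose proof (Rabs_pos y). pose proof (Rabs_pos x'). pose proof (Rabs_pos y'). pose proof (Rabs_pos z).
  assert (Rabs y * Rabs z <= r * r) by (apply Rmult_le_compat; auto).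
  assert (Rabs x' * Rabs z <= r * r) by (apply Rmult_le_compat; auto).
  assert (Rabs x' * Rabs y' <= r * r) by (apply Rmult_le_compat; auto).
  assert (Rabs (x-x') * (Rabs y * Rabs z) <= Rabs (x-x') * (r*r)) by (apply Rmult_le_compat_l; auto).
  assert (Rabs x' * Rabs (y-y') * Rabs z = Rabs (y-y') * (Rabs x' * Rabs z)) by ring.
  assert (Rabs (y-y') * (Rabs x' * Rabs z) <= Rabs (y-y') * (r*r)) by (apply Rmult_le_compat_l; auto).
  assert (Rabs x' * Rabs y' * Rabs (z-z') <= r * r * Rabs (z-z')) by (apply Rmult_le_compat_r; auto).
  lra.
Qed.

Lemma mono2 x y x' y' r S : 0 <= r -> Rabs x <= r -> Rabs x' <= r -> Rabs y <= r -> Rabs y' <= r ->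
  Rabs (x-x') <= S -> Rabs (y-y') <= S ->
  Rabs (x*y - x'*y') <= 3*(r+r*r)*S.
Proof.
  intros. eapply Rle_trans; [apply lip2; eauto|].
  assert (0 <= S) by (eapply Rle_trans; [apply Rabs_pos|eauto]).
  assert (r * (Rabs (x-x') + Rabs (y-y')) <= r * (2*S)) by (apply Rmult_le_compat_l; lra).
  assert (0 <= r*r*S) by (apply Rmult_le_pos; [apply Rmult_le_pos|]; lra).
  nra.
Qed.

Lemma mono3 x y z x' y' z' r S : 0 <= r -> Rabs x <= r -> Rabs x' <= r -> Rabs y <= r -> Rabs y' <= r ->
  Rabs z <= r -> Rabs z' <= r ->
  Rabs (x-x') <= S -> Rabs (y-y') <= S -> Rabs (z-z') <= S ->
  Rabs (x*y*z - x'*y'*z') <= 3*(r+r*r)*S.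
Proof.
  intros. eapply Rle_trans; [apply lip3; eauto|].
  assert (0 <= S) by (eapply Rle_trans; [apply Rabs_pos|eauto]).
  assert (0 <= r*r) by (apply Rmult_le_pos; lra).
  assert (r*r * (Rabs (x-x') + Rabs (y-y') + Rabs (z-z')) <= r*r * (3*S)) by (apply Rmult_le_compat_l; lra).
  assert (0 <= r*S) by (apply Rmult_le_pos; lra).
  nra.
Qed.

Lemma lin5 c1 c2 c3 c4 c5 m1 m2 m3 m4 m5 C M :
  Rabs c1 <= C -> Rabs c2 <= C -> Rabs c3 <= C -> Rabs c4 <= C -> Rabs c5 <= C ->
  Rabs m1 <= M -> Rabs m2 <= M -> Rabs m3 <= M -> Rabs m4 <= M -> Rabs m5 <= M ->
  Rabs (c1*m1 + c2*m2 + c3*m3 + c4*m4 + c5*m5) <= 5*C*M.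
Proof.
  intros.
  assert (HH: forall a b, Rabs a <= C -> Rabs b <= M -> Rabs (a*b) <= C*M).
  { intros a b Ha Hb. rewrite Rabs_mult. apply Rmult_le_compat; auto; apply Rabs_pos. }
  pose proof (HH c1 m1 H H4). pose proof (HH c2 m2 H0 H5). pose proof (HH c3 m3 H1 H6).
  pose proof (HH c4 m4 H2 H7). pose proof (HH c5 m5 H3 H8).
  assert (T3: forall a b c, Rabs (a + b + c) <= Rabs a + Rabs b + Rabs c).
  { intros. eapply Rle_trans; [apply Rabs_triang|]. pose proof (Rabs_triang a b). lra. }
  pose proof (Rabs_triang (c1*m1 + c2*m2 + c3*m3 + c4*m4) (c5*m5)).
  pose proof (Rabs_triang (c1*m1 + c2*m2 + c3*m3) (c4*m4)).
  pose proof (T3 (c1*m1) (c2*m2) (c3*m3)). lra.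
Qed.

Definition Mc (d : nat) (q : R) := 1 + INR d + Rabs (A3 d q / INR d) + Rabs (A3 d q).
Definition Sd (v v' : vec4) := Rabs (c1 v - c1 v') + Rabs (c2 v - c2 v') + Rabs (c3 v - c3 v') + Rabs (c4 v - c4 v').

Lemma blip d q v v' r : 0 <= r ->
  Rabs (c1 v) <= r -> Rabs (c2 v) <= r -> Rabs (c3 v) <= r -> Rabs (c4 v) <= r ->
  Rabs (c1 v') <= r -> Rabs (c2 v') <= r -> Rabs (c3 v') <= r -> Rabs (c4 v') <= r ->
  let B := 5 * (4 * Mc d q) * (3 * (r + r*r) * Sd v v') in
  Rabs (c1 (bnl d q v) - c1 (bnl d q v')) <= B /\
  Rabs (c2 (bnl d q v) - c2 (bnl d q v')) <= B /\
  Rabs (c3 (bnl d q v) - c3 (bnl d q v')) <= B /\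
  Rabs (c4 (bnl d q v) - c4 (bnl d q v')) <= B.
Proof.
  intros Hr H1 H2 H3 H4 H5 H6 H7 H8 B.
  unfold B, Sd, Mc; clear B.
  destruct v as [X Y Z W], v' as [X' Y' Z' W']; simpl in *.
  set (p := INR d). set (be := A3 d q / INR d). set (ga := A3 d q).
  assert (Hp : 0 <= p) by apply pos_INR.
  assert (Hbe : - Rabs be <= be <= Rabs be) by (split; [let h := fresh in pose proof (Rle_abs (- be)) as h; rewrite Rabs_Ropp in h; lra | apply Rle_abs]).
  assert (Hga : - Rabs ga <= ga <= Rabs ga) by (split; [let h := fresh in pose proof (Rle_abs (- ga)) as h; rewrite Rabs_Ropp in h; lra | apply Rle_abs]).
  pose proof (Rabs_pos (X - X')). pose proof (Rabs_pos (Y - Y')). pose proof (Rabs_pos (Z - Z')). pose proof (Rabs_pos (W - W')).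
  set (S := Rabs (X - X') + Rabs (Y - Y') + Rabs (Z - Z') + Rabs (W - W')).
  assert (SX : Rabs (X - X') <= S) by (unfold S; lra).
  assert (SY : Rabs (Y - Y') <= S) by (unfold S; lra).
  assert (SZ : Rabs (Z - Z') <= S) by (unfold S; lra).
  assert (SW : Rabs (W - W') <= S) by (unfold S; lra).
  set (M := 1 + p + Rabs be + Rabs ga).
  unfold bnl, vsub, Fsys, Aapp; simpl. fold p. fold ga. change (ga / p) with be. fold M.
  split; [|split; [|split]].
  - match goal with |- Rabs ?e <= _ => replace e with ((-p)*(X*X*X - X'*X'*X') + (-1)*(X*Z*Z - X'*Z'*Z') + 2*(X*Z - X'*Z') + (2*be)*(W*W - W'*W') + 0*(X*Z - X'*Z')) by (unfold be; ring) end.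
    apply lin5; try (apply Rabs_le; unfold M; lra);
      first [apply mono3 | apply mono2]; auto.
  - match goal with |- Rabs ?e <= _ => replace e with ((-2*p)*(Y*X*X - Y'*X'*X') + 2*(Y*X - Y'*X') + (-2)*(Y*Z*Z - Y'*Z'*Z') + 4*(Y*Z - Y'*Z') + 0*(X*Z - X'*Z')) by ring end.
    apply lin5; try (apply Rabs_le; unfold M; lra);
      first [apply mono3 | apply mono2]; auto.
  - match goal with |- Rabs ?e <= _ => replace e with ((-p)*(Z*X*X - Z'*X'*X') + (-1)*(Z*Z*Z - Z'*Z'*Z') + 3*(Z*Z - Z'*Z') + p*(X*X - X'*X') + ga*(W*W - W'*W')) by ring end.
    apply lin5; try (apply Rabs_le; unfold M; lra);
      first [apply mono3 | apply mono2]; auto.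
  - match goal with |- Rabs ?e <= _ => replace e with ((-p)*(W*X*X - W'*X'*X') + 2*(W*X - W'*X') + (-1)*(W*Z*Z - W'*Z'*Z') + 3*(W*Z - W'*Z') + 0*(X*Z - X'*Z')) by ring end.
    apply lin5; try (apply Rabs_le; unfold M; lra);
      first [apply mono3 | apply mono2]; auto.
Qed.

Lemma exp_mono x y : x <= y -> exp x <= exp y.
Proof. intros H; destruct (Rle_lt_or_eq_dec _ _ H) as [h|h]; [left; apply exp_increasing; auto|subst; lra]. Qed.

Lemma comp_le v : Rabs (c1 v) <= vnorm v /\ Rabs (c2 v) <= vnorm v /\ Rabs (c3 v) <= vnorm v /\ Rabs (c4 v) <= vnorm v.
Proof.
  destruct v as [a b c e]; unfold vnorm; cbn [c1 c2 c3 c4].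
  assert (forall x, x ^ 2 = Rsqr x) by (intros; unfold Rsqr; ring).
  rewrite !H.
  pose proof (Rle_0_sqr a). pose proof (Rle_0_sqr b). pose proof (Rle_0_sqr c). pose proof (Rle_0_sqr e).
  split; [|split; [|split]]; rewrite <- sqrt_Rsqr_abs; apply sqrt_le_1_alt; lra.
Qed.

Lemma vbound v K s : exp (2 * s) * vnorm v <= K -> vnorm v <= K * exp (- (2 * s)).
Proof.
  intros H. pose proof (exp_pos (2*s)). rewrite exp_Ropp.
  apply (Rmult_le_reg_l (exp (2*s))); auto.
  replace (exp (2 * s) * (K * / exp (2 * s))) with K by (field; lra). auto.
Qed.

Lemma phi_lem a e x y S : 1 <= e -> Rabs x <= S -> Rabs y <= S ->
  Rabs (x + a * (e - 1) * y) <= (1 + Rabs a) * e * S /\ Rabs (e * x) <= (1 + Rabs a) * e * S.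
Proof.
  intros He Hx Hy.
  pose proof (Rabs_pos a). pose proof (Rabs_pos x). pose proof (Rabs_pos y).
  assert (0 <= S) by lra.
  assert (Rabs (e - 1) <= e) by (rewrite Rabs_right; lra).
  split.
  - eapply Rle_trans; [apply Rabs_triang|]. rewrite !Rabs_mult.
    assert (Rabs a * Rabs (e-1) * Rabs y <= Rabs a * e * S).
    { apply Rmult_le_compat; auto. apply Rmult_le_pos; auto; apply Rabs_pos.
      apply Rmult_le_compat_l; auto. }
    assert (Rabs x <= e * S) by nra.
    nra.
  - rewrite Rabs_mult, (Rabs_right e) by lra.
    assert (e * Rabs x <= e * S) by (apply Rmult_le_compat_l; lra).
    assert (0 <= Rabs a * e * S) by (apply Rmult_le_pos; [apply Rmult_le_pos|]; lra).
    nra.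
Qed.

Definition C0 d q K := (1 + Rabs (A2 d / (2*INR d))) * (4 * (5*(4*Mc d q)*3)) * (K + K*K).

Lemma Mc_pos d q : 0 <= Mc d q.
Proof. unfold Mc. pose proof (pos_INR d). pose proof (Rabs_pos (A3 d q / INR d)). pose proof (Rabs_pos (A3 d q)). lra. Qed.

Lemma Sd_pos v v' : 0 <= Sd v v'.
Proof. unfold Sd. pose proof (Rabs_pos (c1 v - c1 v')). pose proof (Rabs_pos (c2 v - c2 v')).
  pose proof (Rabs_pos (c3 v - c3 v')). pose proof (Rabs_pos (c4 v - c4 v')). lra. Qed.

Lemma keyb d q (v1 v2 : vec4) K t s : 0 <= K -> 0 <= t -> t <= s ->
  vnorm v1 <= K*exp(-(2*s)) -> vnorm v2 <= K*exp(-(2*s)) ->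
  let G := C0 d q K * exp (-(2*t)) * Sd v1 v2 in
  Rabs (c1 (Phi_app d t s (bnl d q v1)) - c1 (Phi_app d t s (bnl d q v2))) <= G /\
  Rabs (c2 (Phi_app d t s (bnl d q v1)) - c2 (Phi_app d t s (bnl d q v2))) <= G /\
  Rabs (c3 (Phi_app d t s (bnl d q v1)) - c3 (Phi_app d t s (bnl d q v2))) <= G /\
  Rabs (c4 (Phi_app d t s (bnl d q v1)) - c4 (Phi_app d t s (bnl d q v2))) <= G.
Proof.
  intros HK Ht Hts N1 N2 G.
  set (E := exp (-(2*s))).
  assert (HE0 : 0 < E) by apply exp_pos.
  assert (HE1 : E <= 1) by (rewrite <- exp_0; apply exp_mono; lra).
  set (r := K * E).
  assert (Hr : 0 <= r) by (unfold r; nra).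
  destruct (comp_le v1) as [a1 [a2 [a3 a4]]].
  destruct (comp_le v2) as [b1 [b2 [b3 b4]]].
  fold E in N1, N2. fold r in N1, N2.
  destruct (blip d q v1 v2 r Hr) as [D1 [D2 [D3 D4]]]; try lra.
  set (Bv := 5 * (4 * Mc d q) * (3 * (r + r*r) * Sd v1 v2)) in *.
  set (SD := Sd (bnl d q v1) (bnl d q v2)).
  assert (HSD : SD <= 4 * Bv) by (unfold SD, Sd; lra).
  set (e := exp (-2 * (t - s))).
  assert (He : 1 <= e) by (unfold e; rewrite <- exp_0; apply exp_mono; lra).
  assert (HeE : e * E = exp (-(2*t))) by (unfold e, E; rewrite <- exp_plus; f_equal; ring).
  assert (Hrr : r + r*r <= (K + K*K) * E).
  { unfold r. assert (K*E*(K*E) <= K*K*E). { assert (K*K*(E*E) <= K*K*(1*E)).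
      apply Rmult_le_compat_l; nra. nra. } nra. }
  set (a := A2 d / (2 * INR d)).
  assert (Fin : (1 + Rabs a) * e * SD <= G).
  { pose proof (Rabs_pos a). pose proof (Mc_pos d q). pose proof (Sd_pos v1 v2).
    unfold G, C0. fold a.
    set (A := 1 + Rabs a). set (Q := 4 * (5 * (4 * Mc d q) * 3)).
    assert (0 <= A) by (unfold A; lra). assert (0 <= Q) by (unfold Q; lra).
    eapply Rle_trans. apply Rmult_le_compat_l; [apply Rmult_le_pos; lra|exact HSD].
    replace (A * e * (4 * Bv)) with ((A * Q * e) * (r + r*r) * Sd v1 v2) by (unfold Bv, Q; ring).
    rewrite <- HeE.
    replace (A * Q * (K + K * K) * (e * E) * Sd v1 v2) with ((A * Q * e) * ((K + K * K) * E) * Sd v1 v2) by ring.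
    apply Rmult_le_compat_r; auto. apply Rmult_le_compat_l; auto.
    apply Rmult_le_pos; [apply Rmult_le_pos|]; lra. }
  assert (P1 : Rabs (c1 (bnl d q v1) - c1 (bnl d q v2)) <= SD) by (unfold SD, Sd; pose proof (Rabs_pos (c2 (bnl d q v1) - c2 (bnl d q v2))); pose proof (Rabs_pos (c3 (bnl d q v1) - c3 (bnl d q v2))); pose proof (Rabs_pos (c4 (bnl d q v1) - c4 (bnl d q v2))); lra).
  assert (P2 : Rabs (c2 (bnl d q v1) - c2 (bnl d q v2)) <= SD) by (unfold SD, Sd; pose proof (Rabs_pos (c1 (bnl d q v1) - c1 (bnl d q v2))); pose proof (Rabs_pos (c3 (bnl d q v1) - c3 (bnl d q v2))); pose proof (Rabs_pos (c4 (bnl d q v1) - c4 (bnl d q v2))); lra).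
  assert (P3 : Rabs (c3 (bnl d q v1) - c3 (bnl d q v2)) <= SD) by (unfold SD, Sd; pose proof (Rabs_pos (c2 (bnl d q v1) - c2 (bnl d q v2))); pose proof (Rabs_pos (c1 (bnl d q v1) - c1 (bnl d q v2))); pose proof (Rabs_pos (c4 (bnl d q v1) - c4 (bnl d q v2))); lra).
  assert (P4 : Rabs (c4 (bnl d q v1) - c4 (bnl d q v2)) <= SD) by (unfold SD, Sd; pose proof (Rabs_pos (c2 (bnl d q v1) - c2 (bnl d q v2))); pose proof (Rabs_pos (c3 (bnl d q v1) - c3 (bnl d q v2))); pose proof (Rabs_pos (c1 (bnl d q v1) - c1 (bnl d q v2))); lra).
  unfold Phi_app; cbn [c1 c2 c3 c4]. fold e. fold a.
  split; [|split; [|split]].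
  - replace (_ - _) with ((c1 (bnl d q v1) - c1 (bnl d q v2)) + a * (e - 1) * (c2 (bnl d q v1) - c2 (bnl d q v2))) by ring.
    eapply Rle_trans; [apply (phi_lem a e _ _ SD); auto|exact Fin].
  - replace (_ - _) with (e * (c2 (bnl d q v1) - c2 (bnl d q v2))) by ring.
    eapply Rle_trans; [apply (phi_lem a e _ (c2 (bnl d q v1) - c2 (bnl d q v2)) SD); auto|exact Fin].
  - replace (_ - _) with (e * (c3 (bnl d q v1) - c3 (bnl d q v2))) by ring.
    eapply Rle_trans; [apply (phi_lem a e _ (c3 (bnl d q v1) - c3 (bnl d q v2)) SD); auto|exact Fin].
  - replace (_ - _) with (e * (c4 (bnl d q v1) - c4 (bnl d q v2))) by ring.
    eapply Rle_trans; [apply (phi_lem a e _ (c4 (bnl d q v1) - c4 (bnl d q v2)) SD); auto|exact Fin].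
Qed.

Lemma comp_step (f1 f2 : R -> R) u1 w1 w2 t k m :
  improper_int f1 t (u1 - w1) -> improper_int f2 t (u1 - w2) -> 0 <= k -> 0 < m ->
  (forall s, t <= s -> Rabs (f1 s - f2 s) <= k * exp (- m * s)) ->
  Rabs (w1 - w2) <= k * exp (- m * t) / m.
Proof.
  intros I1 I2 Hk Hm Hb.
  replace (w1 - w2) with (- ((u1 - w1) - (u1 - w2))) by ring. rewrite Rabs_Ropp.
  apply (improper_bound f1 f2 (fun s => k * exp (- m * s)) t); auto.
  intros x Hx. apply exp_int; auto.
Qed.

Lemma C0_pos d q K : 0 <= K -> 0 <= C0 d q K.
Proof. intros. unfold C0. pose proof (Rabs_pos (A2 d / (2 * INR d))). pose proof (Mc_pos d q).
  apply Rmult_le_pos; [apply Rmult_le_pos|]; nra. Qed.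

Lemma absdiff x y : Rabs (x - y) <= Rabs x + Rabs y.
Proof. unfold Rminus. rewrite <- (Rabs_Ropp y). apply Rabs_triang. Qed.

Theorem theorem4 (d : nat) (q : R) (u : R -> vec4) :
  (0 < d)%nat ->
  inV u ->
  solves_linear d u ->
  forall v1 v2 : R -> vec4,
    fixed_point_T d q u v1 ->
    fixed_point_T d q u v2 ->
    forall t, 0 <= t -> v1 t = v2 t.
Proof.
  intros Hd Hu Hlin v1 v2 [V1 F1] [V2 F2].
  destruct V1 as [_ [_ [_ [_ [K1 HK1]]]]].
  destruct V2 as [_ [_ [_ [_ [K2 HK2]]]]].
  set (K := Rabs K1 + Rabs K2).
  assert (HK : 0 <= K) by (unfold K; pose proof (Rabs_pos K1); pose proof (Rabs_pos K2); lra).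
  assert (NB : forall s, 0 <= s -> vnorm (v1 s) <= K * exp (-(2*s)) /\ vnorm (v2 s) <= K * exp (-(2*s))).
  { intros s Hs. pose proof (exp_pos (-(2*s))).
    pose proof (vbound _ _ _ (HK1 s Hs)). pose proof (vbound _ _ _ (HK2 s Hs)).
    pose proof (Rle_abs K1). pose proof (Rle_abs K2). pose proof (Rabs_pos K1). pose proof (Rabs_pos K2).
    split; (eapply Rle_trans; [eassumption|]); apply Rmult_le_compat_r; unfold K; lra. }
  set (Sf := fun s => Sd (v1 s) (v2 s)).
  assert (SB : forall s, 0 <= s -> Sf s <= 8 * K * exp (-(2*s))).
  { intros s Hs. destruct (NB s Hs) as [N1 N2].
    destruct (comp_le (v1 s)) as [a1 [a2 [a3 a4]]].
    destruct (comp_le (v2 s)) as [b1 [b2 [b3 b4]]].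
    unfold Sf, Sd.
    pose proof (absdiff (c1 (v1 s)) (c1 (v2 s))). pose proof (absdiff (c2 (v1 s)) (c2 (v2 s))).
    pose proof (absdiff (c3 (v1 s)) (c3 (v2 s))). pose proof (absdiff (c4 (v1 s)) (c4 (v2 s))).
    lra. }
  set (c := 2 * C0 d q K). set (B := 8 * K).
  assert (Hc : 0 <= c) by (unfold c; pose proof (C0_pos d q K HK); lra).
  assert (HB : 0 <= B) by (unfold B; lra).
  assert (IND : forall n s, 0 <= s -> Sf s <= B * c ^ n / INR (Factorial.fact n) * exp (- (2 * INR n + 2) * s)).
  { induction n as [|n IHn].
    - intros s Hs. simpl. replace (- (2 * 0 + 2) * s) with (-(2*s)) by ring.
      replace (B * 1 / 1) with (8 * K) by (unfold B; field). auto.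
    - intros t Ht.
      set (k := C0 d q K * exp (-(2*t)) * (B * c ^ n / INR (Factorial.fact n))).
      set (m := 2 * INR n + 2).
      pose proof (pos_INR n). pose proof (INR_fact_neq_0 n).
      assert (Hf : 0 < INR (Factorial.fact n)) by (apply lt_0_INR; apply Factorial.lt_O_fact).
      assert (Hm : 0 < m) by (unfold m; lra).
      assert (Hk : 0 <= k).
      { unfold k. pose proof (C0_pos d q K HK). pose proof (exp_pos (-(2*t))).
        assert (0 <= B * c ^ n / INR (Factorial.fact n)).
        { unfold Rdiv. apply Rmult_le_pos; [apply Rmult_le_pos; [lra|apply pow_le; lra]|].
          left; apply Rinv_0_lt_compat; lra. }
        apply Rmult_le_pos; [apply Rmult_le_pos|]; lra. }
      assert (GB : forall s, t <= s -> C0 d q K * exp (-(2*t)) * Sf s <= k * exp (- m * s)).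
      { intros s Hs. unfold k.
        replace (C0 d q K * exp (- (2 * t)) * (B * c ^ n / INR (Factorial.fact n)) * exp (- m * s))
          with (C0 d q K * exp (- (2 * t)) * (B * c ^ n / INR (Factorial.fact n) * exp (- m * s))) by ring.
        apply Rmult_le_compat_l. pose proof (C0_pos d q K HK). pose proof (exp_pos (-(2*t))).
        apply Rmult_le_pos; lra.
        apply IHn; lra. }
      destruct (F1 t Ht) as [I11 [I12 [I13 I14]]].
      destruct (F2 t Ht) as [I21 [I22 [I23 I24]]].
      assert (KB : forall s, t <= s -> _) by (intros s Hs; destruct (NB s ltac:(lra)) as [N1 N2];
         exact (keyb d q (v1 s) (v2 s) K t s HK Ht Hs N1 N2)).
      cbv zeta in KB.
      pose proof (comp_step _ _ _ _ _ t k m I11 I21 Hk Hm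
        (fun s Hs => Rle_trans _ _ _ (proj1 (KB s Hs)) (GB s Hs))) as R1.
      pose proof (comp_step _ _ _ _ _ t k m I12 I22 Hk Hm
        (fun s Hs => Rle_trans _ _ _ (proj1 (proj2 (KB s Hs))) (GB s Hs))) as R2.
      pose proof (comp_step _ _ _ _ _ t k m I13 I23 Hk Hm
        (fun s Hs => Rle_trans _ _ _ (proj1 (proj2 (proj2 (KB s Hs)))) (GB s Hs))) as R3.
      pose proof (comp_step _ _ _ _ _ t k m I14 I24 Hk Hm
        (fun s Hs => Rle_trans _ _ _ (proj2 (proj2 (proj2 (KB s Hs)))) (GB s Hs))) as R4.
      assert (Sf t <= 4 * (k * exp (- m * t) / m)) by (unfold Sf, Sd; lra).
      eapply Rle_trans; [eassumption|].
      right. unfold k, m, c. rewrite fact_simpl, mult_INR, S_INR.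
      replace (- (2 * (INR n + 1) + 2) * t) with (-(2*t) + - (2 * INR n + 2) * t) by ring.
      rewrite exp_plus. simpl. field. split; lra. }
  intros t Ht.
  assert (Z : Sf t <= 0).
  { apply Rnot_lt_le. intro Hpos.
    set (eps := Sf t / (B + 1)).
    assert (Heps : 0 < eps) by (unfold eps; apply Rdiv_lt_0_compat; lra).
    destruct (cv_speed_pow_fact c eps Heps) as [N HN].
    specialize (HN N (le_n N)). unfold R_dist in HN. rewrite Rminus_0_r in HN.
    apply Rabs_def2 in HN.
    pose proof (IND N t Ht) as H1.
    assert (HE : exp (- (2 * INR N + 2) * t) <= 1).
    { rewrite <- exp_0. apply exp_mono. pose proof (pos_INR N). nra. }
    assert (Hu0 : 0 <= c ^ N / INR (Factorial.fact N)).
    { unfold Rdiv. apply Rmult_le_pos; [apply pow_le; lra|]. left; apply Rinv_0_lt_compat.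
      apply lt_0_INR; apply Factorial.lt_O_fact. }
    replace (B * c ^ N / INR (Factorial.fact N)) with (B * (c ^ N / INR (Factorial.fact N))) in H1 by (unfold Rdiv; ring).
    assert (B * (c ^ N / INR (Factorial.fact N)) * exp (- (2 * INR N + 2) * t) <= B * (c ^ N / INR (Factorial.fact N))).
    { pose proof (exp_pos (- (2 * INR N + 2) * t)).
      assert (0 <= B * (c ^ N / INR (Factorial.fact N))) by (apply Rmult_le_pos; lra). nra. }
    assert (B * (c ^ N / INR (Factorial.fact N)) <= B * eps) by (apply Rmult_le_compat_l; lra).
    assert (B * eps < Sf t).
    { unfold eps. apply (Rmult_lt_reg_r (B + 1)); [lra|].
      replace (B * (Sf t / (B + 1)) * (B + 1)) with (B * Sf t) by (field; lra). nra. }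
    lra. }
  unfold Sf, Sd in Z.
  pose proof (Rabs_pos (c1 (v1 t) - c1 (v2 t))). pose proof (Rabs_pos (c2 (v1 t) - c2 (v2 t))).
  pose proof (Rabs_pos (c3 (v1 t) - c3 (v2 t))). pose proof (Rabs_pos (c4 (v1 t) - c4 (v2 t))).
  assert (E1 : c1 (v1 t) = c1 (v2 t)) by (apply Rminus_diag_uniq, Rabs_eq_0; lra).
  assert (E2 : c2 (v1 t) = c2 (v2 t)) by (apply Rminus_diag_uniq, Rabs_eq_0; lra).
  assert (E3 : c3 (v1 t) = c3 (v2 t)) by (apply Rminus_diag_uniq, Rabs_eq_0; lra).
  assert (E4 : c4 (v1 t) = c4 (v2 t)) by (apply Rminus_diag_uniq, Rabs_eq_0; lra).
  destruct (v1 t), (v2 t); simpl in *; subst; reflexivity.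
Qed.
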